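(* Let $(E,C)$ be a separated graph, $S\subseteq C_{fin}$, and $K$ a field. For each $X\in C$ let $A_X$ be the $K$-algebra defined in the context, let $A$ be the free product of the $K$-algebras $\{A_X\}_{X\in C}$, and let $I$ be the two-sided ideal of $A$ generated by $\{v_X-v_Y: X,Y\in C,\ v\in E^0\}$. Then $L_K(E,C,S)$ is $K$-isomorphic to the amalgamated free product $A/I$, via an isomorphism sending $e\mapsto[e]$, $e^*\mapsto[e^*]$ for $e\in E^1$ and $v\mapsto[v_X]$ for $v\in E^0$ (any $X\in C$).
   Context: A separated graph is a pair $(E,C)$ where $E=(E^0,E^1,r,s)$ is a directed graph and $C=\bigcup_{v\in E^0}C_v$, where for each non-sink $v$, $C_v$ is a partition of $s^{-1}(v)$ into pairwise disjoint nonempty sets; $C_{fin}$ is the set of finite $Y\in C$. The Cohn-Leavitt algebra $L_K(E,C,S)$ is the universal $K$-algebra generated by pairwise orthogonal idempotents $\{v:v\in E^0\}$ and elements $\{e,e^*:e\in E^1\}$ subject to: $s(e)e=er(e)=e$; $r(e)e^*=e^*s(e)=e^*$; $e^*f=\delta_{e,f}r(e)$ for $e,f\in Y$, $Y\in C$; $v=\sum_{e\in X}ee^*$ for every $X\in S\cap C_v$, $v$ non-sink. For $X\in C$, let $E_X^0=\{v_X:v\in E^0\}$ be a copy of $E^0$, and let $A_X$ be the universal $K$-algebra generated by $E_X^0\cup\{e,e^*:e\in X\}$ subject to: the elements of $E_X^0$ are pairwise orthogonal idempotents; $e\,r(e)_X=e=s(e)_X\,e$ and $r(e)_X e^*=e^*=e^*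 s(e)_X$ for $e\in X$; $e^*f=\delta_{e,f}r(e)_X$ for $e,f\in X$; and, if $X\in S$, $v_X=\sum_{e\in X}ee^*$ where $v$ is the common source of the edges in $X$ (i.e. $X\in C_v$). $[a]$ denotes the class in $A/I$ of $a\in A$. *)

(* Defs.v *)
From mathcomp Require Import all_boot all_algebra.
From Stdlib Require Import List.
Set Implicit Arguments. Unset Strict Implicit. Unset Printing Implicit Defensive.
Import GRing.Theory.
Local Open Scope ring_scope.

(* Not-necessarily-unital associative K-algebras. *)
Record nalg (K : fieldType) := NAlg {
  nalg_sort :> lmodType K;
  nmul : nalg_sort -> nalg_sort -> nalg_sort;
  nmulA : forall x y z, nmul x (nmul y z) = nmul (nmul x y) z;
  nmulDl : forall x y z, nmul (x + y) z = nmul x z + nmul y z;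
  nmulDr : forall x y z, nmul x (y + z) = nmul x y + nmul x z;
  nmulZl : forall (a : K) x y, nmul (a *: x) y = a *: nmul x y;
  nmulZr : forall (a : K) x y, nmul x (a *: y) = a *: nmul x y }.
Arguments nmul {K} n _ _.
Notation "x *n y" := (nmul _ x y) (at level 40, left associativity).

Section Defs.
Variable K : fieldType.

Definition is_morph (A B : nalg K) (f : A -> B) : Prop :=
  (forall (a : K) (x y : A), f (a *: x + y) = a *: f x + f y) /\
  (forall x y : A, f (x *n y) = f x *n f y).

Definition universal3 (V Ed : Type)
    (Rel : forall B : nalg K, (V -> B) -> (Ed -> B) -> (Ed -> B) -> Prop)
    (A : nalg K) (gv : V -> A) (ge gs : Ed -> A) : Prop :=
  Rel A gv ge gs /\
  forall (B : nalg K) (fv : V -> B) (fe fs : Ed -> B), Rel B fv fe fs ->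
    exists phi : A -> B,
      [/\ is_morph phi,
          (forall v, phi (gv v) = fv v),
          (forall e, phi (ge e) = fe e),
          (forall e, phi (gs e) = fs e) &
          forall psi : A -> B, is_morph psi ->
            (forall v, psi (gv v) = fv v) ->
            (forall e, psi (ge e) = fe e) ->
            (forall e, psi (gs e) = fs e) ->
            forall x, psi x = phi x].

Definition is_free_product (I : Type) (A : I -> nalg K) (P : nalg K)
    (iota : forall i, A i -> P) : Prop :=
  (forall i, is_morph (iota i)) /\
  forall (B : nalg K) (f : forall i, A i -> B), (forall i, is_morph (f i)) ->
    exists phi : P -> B,
      [/\ is_morph phi,
          (forall i x, phi (iota i x) = f i x) &
          forall psi : P -> B, is_morph psi ->
            (forall i x, psi (iota i x) = f i x) -> forall y, psi y = phi y].

Definition is_ideal (P : nalg K) (J : P -> Prop) : Prop :=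
  [/\ J 0, (forall x y, J x -> J y -> J (x + y)),
      (forall (a : K) x, J x -> J (a *: x)),
      (forall x y, J y -> J (x *n y)) &
      (forall x y, J x -> J (x *n y))].

Definition gen_ideal (P : nalg K) (T : P -> Prop) (x : P) : Prop :=
  forall J : P -> Prop, is_ideal J -> (forall t, T t -> J t) -> J x.

Definition is_quotient (P Q : nalg K) (pi : P -> Q) (J : P -> Prop) : Prop :=
  [/\ is_morph pi, (forall q, exists p, pi p = q) & (forall p, pi p = 0 <-> J p)].
End Defs.

(* Separated graphs: C is given as a partition of E^1 into classes indexed by
   Cl, each class X nonempty and contained in s^{-1}(clsrc X); so C_v is the
   set of classes with clsrc X = v. *)
Record sep_graph := SepGraph {
  V : Type; E : Type; Cl : Type;
  src : E -> V; rng : E -> V;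
  cls : E -> Cl; clsrc : Cl -> V;
  clsrcP : forall e, src e = clsrc (cls e);
  clsne : forall X : Cl, exists e, cls e = X }.

Section Rels.
Variables (K : fieldType) (G : sep_graph) (S : Cl G -> Prop).

Definition rel_L (B : nalg K) (gv : V G -> B) (ge gs : E G -> B) : Prop :=
  (forall v, gv v *n gv v = gv v) /\
  (forall v w, v <> w -> gv v *n gv w = 0) /\
  (forall e, gv (src e) *n ge e = ge e) /\
  (forall e, ge e *n gv (rng e) = ge e) /\
  (forall e, gv (rng e) *n gs e = gs e) /\
  (forall e, gs e *n gv (src e) = gs e) /\
  (forall e, gs e *n ge e = gv (rng e)) /\
  (forall e f, cls e = cls f -> e <> f -> gs e *n ge f = 0) /\
  (forall X, S X -> forall l : list (E G), NoDup l -> (forall e, In e l <-> cls e = X) ->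
     gv (clsrc X) = \sum_(e <- l) (ge e *n gs e)).

Definition rel_AX (X : Cl G) (B : nalg K) (gv : V G -> B)
    (ge gs : {e : E G | cls e = X} -> B) : Prop :=
  (forall v, gv v *n gv v = gv v) /\
  (forall v w, v <> w -> gv v *n gv w = 0) /\
  (forall e, ge e *n gv (rng (proj1_sig e)) = ge e) /\
  (forall e, gv (src (proj1_sig e)) *n ge e = ge e) /\
  (forall e, gv (rng (proj1_sig e)) *n gs e = gs e) /\
  (forall e, gs e *n gv (src (proj1_sig e)) = gs e) /\
  (forall e, gs e *n ge e = gv (rng (proj1_sig e))) /\
  (forall e f, e <> f -> gs e *n ge f = 0) /\
  (S X -> forall l : list {e : E G | cls e = X}, NoDup l -> (forall e, In e l) ->
     gv (clsrc X) = \sum_(e <- l) (ge e *n gs e)).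
End Rels.

(* Main.v *)
Require Import Defs.
From mathcomp Require Import all_boot all_algebra.
From Stdlib Require Import List ClassicalEpsilon ProofIrrelevance.
Set Implicit Arguments. Unset Strict Implicit.
Import GRing.Theory.
Local Open Scope ring_scope.

Section H.
Variable K : fieldType.
Implicit Types A B C : nalg K.

Lemma morph_add A B (f : A -> B) : is_morph f -> forall x y, f (x + y) = f x + f y.
Proof. by move=> [h _] x y; have := h 1 x y; rewrite !scale1r. Qed.

Lemma morph0 A B (f : A -> B) : is_morph f -> f 0 = 0.
Proof.
move=> hf; have H := morph_add hf 0 0; rewrite addr0 in H.
have : f 0 + f 0 - f 0 = f 0 - f 0 by rewrite -H.
by rewrite addrK subrr.
Qed.

Lemma morphB A B (f : A -> B) : is_morph f -> forall x y, f (x - y) = f x - f y.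
Proof.
move=> [h _] x y; rewrite addrC [RHS]addrC; have := h (-1) y x; by rewrite !scaleN1r.
Qed.

Lemma morphZ A B (f : A -> B) : is_morph f -> forall a x, f (a *: x) = a *: f x.
Proof.
move=> hf a x; have := hf.1 a x 0; rewrite !addr0 (morph0 hf) addr0 //.
Qed.

Lemma morph_sum A B (f : A -> B) (I : Type) (l : list I) (F : I -> A) :
  is_morph f -> f (\sum_(i <- l) F i) = \sum_(i <- l) f (F i).
Proof.
move=> hf; elim: l => [|a l IH]; first by rewrite !big_nil (morph0 hf).
by rewrite !big_cons (morph_add hf) IH.
Qed.

Lemma morph_comp A B C (f : A -> B) (g : B -> C) :
  is_morph f -> is_morph g -> is_morph (fun x => g (f x)).
Proof.
move=> [f1 f2] [g1 g2]; split=> *; by rewrite ?f1 ?g1 ?f2 ?g2.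
Qed.

Lemma nmul0r A (x : A) : x *n 0 = 0.
Proof. by have := nmulZr 0 x 0; rewrite !scale0r. Qed.

Lemma nmul0l A (x : A) : 0 *n x = 0.
Proof. by have := nmulZl 0 0 x; rewrite !scale0r. Qed.

Lemma sum_lmap (R : zmodType) (I J : Type) (f : I -> J) (l : list I) (F : J -> R) :
  \sum_(x <- List.map f l) F x = \sum_(y <- l) F (f y).
Proof. elim: l => [|a l IH]; by rewrite /= ?big_nil ?big_cons ?IH. Qed.

Lemma rel_AX_morph (G : sep_graph) (S : Cl G -> Prop) (X : Cl G) A B (f : A -> B)
  gv ge gs : is_morph f -> @rel_AX K G S X A gv ge gs ->
  @rel_AX K G S X B (fun v => f (gv v)) (fun e => f (ge e)) (fun e => f (gs e)).
Proof.
move=> hf [h1 [h2 [h3 [h4 [h5 [h6 [h7 [h8 h9]]]]]]]]; have hm := hf.2.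
split; [|split; [|split; [|split; [|split; [|split; [|split; [|split]]]]]]].
- by move=> v; rewrite -hm h1.
- by move=> v w vw; rewrite -hm h2 // (morph0 hf).
- by move=> e; rewrite -hm h3.
- by move=> e; rewrite -hm h4.
- by move=> e; rewrite -hm h5.
- by move=> e; rewrite -hm h6.
- by move=> e; rewrite -hm h7.
- by move=> e e' ee; rewrite -hm h8 // (morph0 hf).
- move=> SX l nd al; rewrite (h9 SX l nd al) morph_sum //.
  by apply: eq_bigr => e _; rewrite hm.
Qed.
End H.
Unset Implicit Arguments. Set Strict Implicit.

Theorem proposition4p4 (K : fieldType) (G : sep_graph) (S : Cl G -> Prop)
  (hS : forall X, S X -> exists l : list (E G), NoDup l /\ (forall e, In e l <-> cls e = X))
  (hC : inhabited (Cl G))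
  (L : nalg K) (lv : V G -> L) (le ls : E G -> L)
  (hL : universal3 (@rel_L K G S) lv le ls)
  (AX : Cl G -> nalg K) (axv : forall X, V G -> AX X)
  (axe axs : forall X, {e : E G | cls e = X} -> AX X)
  (hAX : forall X, universal3 (@rel_AX K G S X) (axv X) (axe X) (axs X))
  (P : nalg K) (iota : forall X, AX X -> P) (hP : is_free_product iota)
  (Q : nalg K) (pi : P -> Q)
  (hQ : is_quotient pi (gen_ideal (fun p : P =>
          exists (X Y : Cl G) (v : V G), p = iota X (axv X v) - iota Y (axv Y v)))) :
  exists phi : L -> Q,
    [/\ is_morph phi, bijective phi,
        (forall e : E G, phi (le e) =
           pi (iota (cls e) (axe (cls e) (exist (fun f => cls f = cls e) e erefl)))),
        (forall e : E G, phi (ls e) =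
           pi (iota (cls e) (axs (cls e) (exist (fun f => cls f = cls e) e erefl)))) &
        (forall (v : V G) (X : Cl G), phi (lv v) = pi (iota X (axv X v)))].
Proof.
have [X0] := hC.
case: hQ => pim pisurj piker.
case: hP => iotam hPu.
have hvv : forall v X Y, pi (iota X (axv X v)) = pi (iota Y (axv Y v)).
  move=> v X Y; apply/eqP; rewrite -subr_eq0 -(morphB pim); apply/eqP.
  apply (proj2 (piker _)) => J hJ hT; apply: hT; by exists X, Y, v.
have htre : forall f X (h : cls f = X), iota (cls f) (axe (cls f) (exist _ f erefl))
    = iota X (axe X (exist _ f h)).
  by move=> f X h; subst X.
have htrs : forall f X (h : cls f = X), iota (cls f) (axs (cls f) (exist _ f erefl))
    = iota X (axs X (exist _ f h)).
  by move=> f X h; subst X.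
pose fv v := pi (iota X0 (axv X0 v)).
pose fe e := pi (iota (cls e) (axe (cls e) (exist (fun f => cls f = cls e) e erefl))).
pose fs e := pi (iota (cls e) (axs (cls e) (exist (fun f => cls f = cls e) e erefl))).
have hAXQ : forall X, rel_AX S (fun v => pi (iota X (axv X v)))
   (fun e => pi (iota X (axe X e))) (fun e => pi (iota X (axs X e))).
  move=> X; exact: (rel_AX_morph (morph_comp (iotam X) pim) (hAX X).1).
have hrelQ : rel_L S fv fe fs.
  have hX := fun e => hAXQ (cls e).
  split; [|split; [|split; [|split; [|split; [|split; [|split; [|split]]]]]]].
  - by move=> v; case: (hAXQ X0) => h _; exact: h.
  - by move=> v w; case: (hAXQ X0) => _ [h _]; exact: h.
  - move=> e; rewrite /fv (hvv _ X0 (cls e)).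
    by case: (hX e) => _ [_ [_ [h _]]]; exact: (h (exist _ e erefl)).
  - move=> e; rewrite /fv (hvv _ X0 (cls e)).
    by case: (hX e) => _ [_ [h _]]; exact: (h (exist _ e erefl)).
  - move=> e; rewrite /fv (hvv _ X0 (cls e)).
    by case: (hX e) => _ [_ [_ [_ [h _]]]]; exact: (h (exist _ e erefl)).
  - move=> e; rewrite /fv (hvv _ X0 (cls e)).
    by case: (hX e) => _ [_ [_ [_ [_ [h _]]]]]; exact: (h (exist _ e erefl)).
  - move=> e; rewrite /fv (hvv _ X0 (cls e)).
    by case: (hX e) => _ [_ [_ [_ [_ [_ [h _]]]]]]; exact: (h (exist _ e erefl)).
  - move=> e f hef nef; rewrite /fe (htre f (cls e) (esym hef)).
    case: (hX e) => _ [_ [_ [_ [_ [_ [_ [h _]]]]]]]; apply: h.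
    by move=> /(congr1 (@proj1_sig _ _)) /= H; apply: nef.
  move=> X SX l nd Hin; rewrite /fv (hvv _ X0 X).
  have Hin' : forall e, In e l -> cls e = X by move=> e /Hin.
  have [e0 he0] := clsne X.
  pose g e : {e : E G | cls e = X} := match excluded_middle_informative (cls e = X) with
     | left h => exist _ e h | right _ => exist _ e0 he0 end.
  have gP : forall e (h : cls e = X), g e = exist _ e h.
    move=> e h; rewrite /g; case: excluded_middle_informative => [h'|nh]; last by [].
    by rewrite (proof_irrelevance _ h h').
  have hmapg : List.map (@proj1_sig _ _) (List.map g l) = l.
    elim: l {nd Hin} Hin' => [|a l IH] H //=.
    by rewrite (gP a (H a (or_introl erefl))) /= IH // => e he; apply: H; right.
  case: (hAXQ X) => _ [_ [_ [_ [_ [_ [_ [_ h9]]]]]]].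
  rewrite (h9 SX (List.map g l)).
  - elim: l {nd Hin hmapg} Hin' => [|a l IH] H; first by rewrite /= !big_nil.
    rewrite /= !big_cons IH; last by move=> e he; apply: H; right.
    have ha := H a (or_introl erefl).
    by rewrite (gP a ha) /fe /fs (htre a X ha) (htrs a X ha).
  - by apply: (NoDup_map_inv (@proj1_sig _ _)); rewrite hmapg.
  case=> e h; rewrite -(gP e h); apply: in_map; exact: (proj2 (Hin e) h).
have [phi [phim phiv phie phis _]] := hL.2 Q fv fe fs hrelQ.
have hLr := hL.1.
have hAXL : forall X, rel_AX S lv (fun e : {e : E G | cls e = X} => le (proj1_sig e))
     (fun e : {e : E G | cls e = X} => ls (proj1_sig e)).
  move=> X; case: hLr => h1 [h2 [h3 [h4 [h5 [h6 [h7 [h8 h9]]]]]]].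
  split; [|split; [|split; [|split; [|split; [|split; [|split; [|split]]]]]]].
  - exact: h1.
  - exact: h2.
  - by move=> e; apply: h4.
  - by move=> e; apply: h3.
  - by move=> e; apply: h5.
  - by move=> e; apply: h6.
  - by move=> e; apply: h7.
  - case=> e he [f hf] nef; apply: h8 => /=; first by rewrite he hf.
    move=> H; apply: nef; subst f; by rewrite (proof_irrelevance _ he hf).
  move=> SX l nd al.
  rewrite (h9 X SX (List.map (@proj1_sig _ _) l)).
  - by rewrite sum_lmap.
  - apply: NoDup_map_NoDup_ForallPairs => //.
    case=> [x hx] [y hy] _ _ /= H; subst y; by rewrite (proof_irrelevance _ hx hy).
  move=> e; split.
  - by case/in_map_iff => [[x hx]] /= [<- _].
  - move=> he; apply/in_map_iff; exists (exist _ e he); split=> //.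
have hfX : forall X, exists f : AX X -> L, [/\ is_morph f,
    (forall v, f (axv X v) = lv v), (forall e, f (axe X e) = le (proj1_sig e)) &
    (forall e, f (axs X e) = ls (proj1_sig e))].
  move=> X; have [f [? ? ? ? _]] := (hAX X).2 L _ _ _ (hAXL X).
  by exists f; split.
pose fX X := proj1_sig (constructive_indefinite_description _ (hfX X)).
have fXP : forall X, [/\ is_morph (fX X),
    (forall v, fX X (axv X v) = lv v), (forall e, fX X (axe X e) = le (proj1_sig e)) &
    (forall e, fX X (axs X e) = ls (proj1_sig e))].
  move=> X; exact: (proj2_sig (constructive_indefinite_description _ (hfX X))).
have fXm : forall X, is_morph (fX X) by move=> X; case: (fXP X).
have [Psi [Psim PsiI _]] := hPu L fX fXm.
have hker : forall p, pi p = 0 -> Psi p = 0.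
  move=> p /piker H; apply: (H (fun p => Psi p = 0)).
  - split.
    + exact: morph0.
    + by move=> x y hx hy; rewrite (morph_add Psim) hx hy addr0.
    + by move=> a x hx; rewrite (morphZ Psim) hx scaler0.
    + by move=> x y hy; rewrite Psim.2 hy nmul0r.
    + by move=> x y hx; rewrite Psim.2 hx nmul0l.
  move=> t [X [Y [v ->]]]; rewrite (morphB Psim) !PsiI.
  by case: (fXP X) => _ -> _ _; case: (fXP Y) => _ -> _ _; rewrite subrr.
pose psi q := Psi (proj1_sig (constructive_indefinite_description _ (pisurj q))).
have psiP : forall p, psi (pi p) = Psi p.
  move=> p; rewrite /psi; case: constructive_indefinite_description => p' /= hp'.
  apply/eqP; rewrite -subr_eq0 -(morphB Psim); apply/eqP; apply: hker.
  by rewrite (morphB pim) hp' subrr.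
have psim : is_morph psi.
  split.
  - move=> a x y; have [p <-] := pisurj x; have [p' <-] := pisurj y.
    by rewrite -(morphZ pim) -(morph_add pim) !psiP (morph_add Psim) (morphZ Psim).
  - move=> x y; have [p <-] := pisurj x; have [p' <-] := pisurj y.
    by rewrite -pim.2 !psiP Psim.2.
exists phi; split => //.
- exists psi.
  + have [phL [_ _ _ _ phLu]] := hL.2 L lv le ls hLr.
    have idm : is_morph (fun x : L => x) by split.
    move=> x; rewrite (phLu _ (morph_comp phim psim)).
    * by symmetry; apply: (phLu (fun y => y) idm).
    * by move=> v; rewrite phiv /fv psiP PsiI; case: (fXP X0).
    * by move=> e; rewrite phie /fe psiP PsiI; case: (fXP (cls e)) => _ _ -> _.
    * by move=> e; rewrite phis /fs psiP PsiI; case: (fXP (cls e)) => _ _ _ ->.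
  + move=> q; have [p <-] := pisurj q; rewrite psiP.
    have [phQ [_ _ phQu]] := hPu Q (fun X x => pi (iota X x))
         (fun X => morph_comp (iotam X) pim).
    rewrite (phQu _ (morph_comp Psim phim)) ?(phQu _ pim) //.
    move=> X x; rewrite PsiI.
    have [phX [_ _ _ _ phXu]] := (hAX X).2 Q _ _ _ (hAXQ X).
    rewrite (phXu _ (morph_comp (fXm X) phim)) ?(phXu _ (morph_comp (iotam X) pim)) //.
    * by move=> v; case: (fXP X) => _ -> _ _; rewrite phiv /fv (hvv _ X0 X).
    * case=> e h; case: (fXP X) => _ _ -> _; rewrite phie /fe /=.
      by rewrite (htre e X h).
    * case=> e h; case: (fXP X) => _ _ _ ->; rewrite phis /fs /=.
      by rewrite (htrs e X h).
- by move=> v X; rewrite phiv /fv (hvv _ X0 X).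
Qed.
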